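(* There is no binary self-orthogonal $[118,7,58]$ code.
   Context: A binary linear code $C$ is self-orthogonal if $C\subseteq C^\perp$. *)

(* Defs.v *)
From HB Require Import structures.
From mathcomp Require Import all_boot all_order all_algebra all_field.
Set Implicit Arguments. Unset Strict Implicit. Unset Printing Implicit Defensive.
Import GRing.Theory.
Local Open Scope ring_scope.

Definition bcode (n : nat) := {vspace 'rV['F_2]_n}.

Definition bdot (n : nat) (x y : 'rV['F_2]_n) : 'F_2 := \sum_(i < n) x 0 i * y 0 i.

Definition hwt (n : nat) (x : 'rV['F_2]_n) : nat := #|[set i | x 0 i != 0]|.

Definition self_orthogonal (n : nat) (C : bcode n) : Prop :=
  forall x y, x \in C -> y \in C -> bdot x y = 0.

Definition min_dist (n : nat) (C : bcode n) (d : nat) : Prop :=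
  (exists2 c, c \in C & (c != 0) && (hwt c == d)) /\
  (forall c, c \in C -> c != 0 -> (d <= hwt c)%N).

Definition is_code_nkd (n k d : nat) (C : bcode n) : Prop :=
  \dim C = k /\ min_dist C d.

(* Main.v *)
Require Import Defs.
From mathcomp Require Import all_boot all_order all_algebra all_field zify.
Import GRing.Theory.
Set Implicit Arguments. Unset Strict Implicit.
Local Open Scope ring_scope.

Lemma F2cases (a : 'F_2) : a = 0 \/ a = 1.
Proof. by case: a => -[|[|m]] Hm; [left|right|]; try apply/val_inj. Qed.

Lemma F2_11 : (1 + 1 : 'F_2) = 0. Proof. by apply/val_inj. Qed.

Definition inter n (x y : 'rV['F_2]_n) : nat :=
  (\sum_(i < n) ((x 0%R i != 0%R) && (y 0%R i != 0%R)))%N.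

Lemma hwtE n (x : 'rV['F_2]_n) : hwt x = (\sum_(i < n) (x 0%R i != 0%R : nat))%N.
Proof.
rewrite /hwt -sum1_card big_mkcond /=; apply: eq_bigr => i _.
by rewrite inE; case: (_ != 0).
Qed.

Lemma hwt_add n (x y : 'rV['F_2]_n) : addn (hwt (x + y)) (muln 2 (inter x y)) = addn (hwt x) (hwt y).
Proof.
rewrite !hwtE /inter big_distrr /= -!big_split /=; apply: eq_bigr => i _.
rewrite !mxE; case: (F2cases (x 0 i)) => ->; case: (F2cases (y 0 i)) => ->;
  by rewrite ?F2_11 ?addr0 ?add0r ?oner_eq0 ?eqxx.
Qed.

Lemma bdotE n (x y : 'rV['F_2]_n) : bdot x y = (inter x y)%:R.
Proof.
rewrite /bdot /inter natr_sum; apply: eq_bigr => i _.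
case: (F2cases (x 0 i)) => ->; case: (F2cases (y 0 i)) => ->;
  by rewrite ?mulr0 ?mul0r ?mulr1 ?oner_eq0 ?eqxx.
Qed.

Lemma F2nat0 m : (m%:R : 'F_2) = 0 -> (2 %| m)%N.
Proof. by move=> h; rewrite (dvdn_pcharf (pchar_Fp (isT : prime 2))) h. Qed.

Lemma inter_xx n (x : 'rV['F_2]_n) : inter x x = hwt x.
Proof. by rewrite hwtE /inter; apply: eq_bigr => i _; rewrite andbb. Qed.

Lemma addvv n (v : 'rV['F_2]_n) : v + v = 0.
Proof. by apply/rowP => i; rewrite !mxE; case: (F2cases (v 0 i)) => ->; rewrite ?addr0 ?F2_11. Qed.

Lemma hwt0 n : hwt (0 : 'rV['F_2]_n) = 0%N.
Proof. by rewrite hwtE big1 // => i _; rewrite mxE eqxx. Qed.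

Lemma sum_ind (T : finType) (D : {set T}) (P : pred T) :
  (\sum_(x in D) (P x : nat))%N = #|[set x in D | P x]|.
Proof.
rewrite -sum1_card big_mkcond [RHS]big_mkcond /=; apply: eq_bigr => x _.
by rewrite inE; case: (x \in D); case: (P x).
Qed.

Lemma cardCode (C : bcode 118) : \dim C = 7%N -> #|[set x | x \in C]| = 128%N.
Proof. by move=> hd; rewrite cardsE card_vspace hd card_Fp. Qed.

Lemma ar4 d s i u : (2 * s <= 118 * d)%N -> (d * 60 <= 60 + s)%N -> (i <= d)%N -> (u <= d + i)%N -> (128 <= u)%N -> False.
Proof. move=> *; lia. Qed.

Lemma ar1 a b c d : (4 %| a)%N -> (4 %| b)%N -> (2 %| d)%N -> addn c (muln 2 d) = addn a b -> (4 %| c)%N.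
Proof. move=> *; lia. Qed.
Lemma ar2 a b c d : (2 %| a)%N -> ~~ (4 %| a)%N -> b = 58%N -> (2 %| d)%N -> addn c (muln 2 d) = addn a b -> (4 %| c)%N.
Proof. move=> *; lia. Qed.
Lemma ar3 a : (4 %| a)%N -> (57 < a)%N -> (60 <= a)%N.
Proof. move=> *; lia. Qed.

Theorem proposition6p4 :
  ~ exists C : bcode 118, is_code_nkd 7 58 C /\ self_orthogonal C.
Proof.
case=> C [[hdim [[c cC /andP[c0 /eqP hc]] hmin]] so].
have even x : x \in C -> (2 %| hwt x)%N.
  by move=> xC; rewrite -inter_xx; apply: F2nat0; rewrite -bdotE so.
have ieven x y : x \in C -> y \in C -> (2 %| inter x y)%N.
  by move=> xC yC; apply: F2nat0; rewrite -bdotE so.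
pose D := [set x | (x \in C) && (4 %| hwt x)%N].
have Dadd x y : x \in D -> y \in D -> x + y \in D.
  rewrite !inE => /andP[xC hx] /andP[yC hy]; rewrite memvD //=.
  exact: (ar1 hx hy (ieven _ _ xC yC) (hwt_add x y)).
have half (i : 'I_118) : (2 * #|[set x in D | x 0%R i != 0%R]| <= #|D|)%N.
  case: (pickP [pred y | (y \in D) && (y 0 i != 0)]) => [y /andP[yD yi] | none]; last first.
    suff -> : [set x in D | x 0 i != 0] = set0 by rewrite cards0.
    by apply/setP => x; rewrite !inE; have := none x; rewrite /= inE.
  set A1 := [set x in D | x 0 i != 0].
  have hA : (#|A1| <= #|D :\: A1|)%N.
    rewrite -(card_imset _ (addIr y)); apply: subset_leq_card.
    apply/subsetP => z /imsetP[x xA1 ->]; move: xA1; rewrite inE => /andP[xD xi].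
    have hD := Dadd _ _ xD yD.
    rewrite in_setD hD andbT in_set hD /= !mxE.
    case: (F2cases (x 0 i)) xi => -> //; case: (F2cases (y 0 i)) yi => -> //.
  have := cardsID A1 D.
  have -> : D :&: A1 = A1 by apply/setIidPr/subsetP => x; rewrite inE => /andP[].
  lia.
have S_up : (2 * \sum_(x in D) hwt x <= 118 * #|D|)%N.
  under eq_bigr => x _ do rewrite hwtE.
  rewrite exchange_big /= big_distrr /=.
  under eq_bigr => i _ do rewrite sum_ind.
  rewrite -[X in (_ <= X * _)%N](card_ord 118) -sum_nat_const.
  by apply: leq_sum => i _; apply: half.
have D0 : (0 : 'rV_118) \in D by rewrite inE mem0v hwt0.
have S_lo : (#|D| * 60 <= 60 + \sum_(x in D) hwt x)%N.
  rewrite -sum_nat_const (bigD1 0) //= [X in (_ <= _ + X)%N](bigD1 0) //= hwt0 add0n.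
  rewrite leq_add2l; apply: leq_sum => x /andP[]; rewrite inE => /andP[xC hx] x0.
  have := hmin x xC x0; lia.
have hC := cardCode hdim.
have sub : [set x | x \in C] \subset D :|: [set x + c | x in D].
  apply/subsetP => x; rewrite !inE => xC.
  case h4: (4 %| hwt x)%N; first by rewrite xC.
  apply/orP; right; apply/imsetP; exists (x + c).
    rewrite inE memvD //=.
    exact: (ar2 (even _ xC) (negbT h4) hc (ieven _ _ xC cC) (hwt_add x c)).
  by rewrite -addrA addvv addr0.
have := subset_leq_card sub.
have := leq_card_setU D [set x + c | x in D].
have := leq_imset_card (fun x => x + c) D.
move=> h1 [h2 _] h3; rewrite hC in h3.
exact: (ar4 S_up S_lo h1 h2 h3).
Qed.
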